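(* Let $\mathcal V\subset\mathbb Q$ satisfy Hypothesis (H) and let $\mathcal R\subset\mathbb Q$ satisfy property $\star_{\mathcal V}$. Then the $\mathbf K$-linear map $\mathscr H\to\mathscr H_{|\mathcal R}$, $f=\sum_\gamma f_\gamma z^\gamma\mapsto f_{|\mathcal R}=\sum_{\gamma\in\mathcal R}f_\gamma z^\gamma$, restricts to a $\mathbf K$-linear isomorphism from $\operatorname{Sol}(L,\mathscr H)=\{f\in\mathscr H: L(f)=0\}$ onto $\mathcal C_{\mathcal R}=\{f\in\mathscr H_{|\mathcal R}:\operatorname{supp} L(f)\cap\psi(\mathcal R)=\emptyset\}=\{f\in\mathscr H_{|\mathcal R}:\pi(\operatorname{supp} L(f))\cap\mathcal R=\emptyset\}$.
   Context: Let $\mathbf K$ be a field and $\ell\geq 2$ an integer. Let $\mathscr H$ be the field of Hahn series $f=\sum_{\gamma\in\mathbb Q}f_\gamma z^\gamma$ with coefficients in $\mathbf K$ and well-ordered support $\operatorname{supp} f=\{\gamma: f_\gamma\neq 0\}$; for $Q\subset\mathbb Q$, $\mathscr H_{|Q}=\{f\in\mathscr H:\operatorname{supp} f\subset Q\}$. Let $\phi_\ell$ be the automorphism $f(z)\mapsto f(z^\ell)$. Let $L=a_n\phi_\ell^n+\dots+a_0$ with $n\geq1$, $a_i\in\mathbf K[z]$, $a_0a_n\neq0$, acting by $L(f)=\sum_i a_i f(z^{\ell^i})$. Let $\mathcal P(L)=\{(\ell^i,j): 0\le i\le n,\ j\in\operatorname{supp} a_i\}$. The Newton polygon of $L$ is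 the convex hull of $\{(\ell^i,j): 0\le i\le n,\ j\geq\operatorname{val} a_i\}\subset\mathbb R^2$; the slopes of its non-vertical edges form $\mathcal S(L)$. Define $\Psi(v)=\{v\ell^i+j:(\ell^i,j)\in\mathcal P(L)\}$, $\psi(v)=\min\Psi(v)$, $\pi(q)=\max\{(q-j)/\ell^i:(\ell^i,j)\in\mathcal P(L)\}$; images of sets are taken elementwise. Hypothesis (H) on $\mathcal V\subset\mathbb Q$: (1) every $f\in\mathscr H$ with $L(f)=0$ satisfies $\operatorname{supp} f\subset\mathcal V$; (2) $\mathcal V$ is well-ordered; (3) $-\mathcal S(L)\subset\mathcal V$; (4) $\bigcup_{v\in\mathcal V}\pi(\Psi(v))=\mathcal V$. A set $\mathcal R\subset\mathbb Q$ satisfies $\star_{\mathcal V}$ if (a) $-\mathcal S(L)\subset\mathcal R\subset\mathcal V$ and (b) $\bigcup_{v\in\mathcal V\setminus\mathcal R}\pi(\Psi(v))=\mathcal V\setminus\mathcal R$. *)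

(* Defs.v *)
(* Hahn series over Q with coefficients in a field K are
   represented by their coefficient functions rat -> K with well-ordered
   support; subsets of Q are predicates rat -> Prop. *)
From HB Require Import structures.
From mathcomp Require Import all_boot all_order all_algebra.
From Stdlib Require Import ClassicalEpsilon.
Set Implicit Arguments. Unset Strict Implicit. Unset Printing Implicit Defensive.
Import Order.TTheory GRing.Theory Num.Theory.
Local Open Scope ring_scope.

Definition well_ordered (A : rat -> Prop) : Prop :=
  forall B : rat -> Prop, (forall q, B q -> A q) -> (exists q, B q) ->
  exists m, B m /\ forall q, B q -> m <= q.

Section Defs.
Variable K : fieldType.

Definition supp (f : rat -> K) : rat -> Prop := fun q => f q != 0.

Definition hahn (f : rat -> K) : Prop := well_ordered (supp f).

Definition hahn_on (Q : rat -> Prop) (f : rat -> K) : Prop :=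
  hahn f /\ forall q, supp f q -> Q q.

Definition restr (R : rat -> Prop) (f : rat -> K) : rat -> K :=
  fun q => if excluded_middle_informative (R q) then f q else 0.

Definition pval (p : {poly K}) : nat := find (fun c => c != 0) p.

Variables (l n : nat) (a : nat -> {poly K}).

(* L(f) = sum_{i<=n} a_i(z) f(z^(l^i)); coefficient of z^q *)
Definition Lop (f : rat -> K) : rat -> K :=
  fun q => \sum_(i < n.+1) \sum_(j < size (a i))
             (a i)`_j * f ((q - j%:R) / (l%:R ^+ i)).

(* P(L) = {(l^i, j) : 0 <= i <= n, j in supp a_i}, encoded by pairs (i, j) *)
Definition PL : seq (nat * nat) :=
  [seq (i, j) | i <- iota 0 n.+1,
                j <- [seq j <- iota 0 (size (a i)) | (a i)`_j != 0]].

Definition Psi (v : rat) : seq rat :=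
  [seq v * l%:R ^+ p.1 + p.2%:R | p <- PL].

Definition seqmin (s : seq rat) : rat := \big[Order.min/head 0 s]_(x <- s) x.
Definition seqmax (s : seq rat) : rat := \big[Order.max/head 0 s]_(x <- s) x.

Definition psi (v : rat) : rat := seqmin (Psi v).

Definition pi (q : rat) : rat :=
  seqmax [seq (q - p.2%:R) / l%:R ^+ p.1 | p <- PL].

(* S(L): slopes of the non-vertical edges of the Newton polygon, i.e. of the
   convex hull of {(l^i, j) : j >= val a_i}.  A non-vertical edge is a segment
   of the lower boundary joining two vertices (l^i, val a_i), (l^k, val a_k),
   i < k, whose line supports all the points. *)
Definition slope (s : rat) : Prop :=
  exists i k, [/\ (i < k <= n)%N, a i != 0, a k != 0,
    s = ((pval (a k))%:R - (pval (a i))%:R) / (l%:R ^+ k - l%:R ^+ i) &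
    forall m, (m <= n)%N -> a m != 0 ->
      (pval (a i))%:R - s * l%:R ^+ i <= (pval (a m))%:R - s * l%:R ^+ m].

Definition Sol (f : rat -> K) : Prop := hahn f /\ forall q, Lop f q = 0.

Definition hypH (V : rat -> Prop) : Prop :=
  [/\ (forall f, Sol f -> forall q, supp f q -> V q),
      well_ordered V,
      (forall s, slope s -> V (- s)) &
      (forall q, (exists v, V v /\ exists2 w, w \in Psi v & q = pi w) <-> V q)].

Definition starV (V R : rat -> Prop) : Prop :=
  [/\ (forall s, slope s -> R (- s)),
      (forall q, R q -> V q) &
      (forall q, (exists v, (V v /\ ~ R v) /\ exists2 w, w \in Psi v & q = pi w)
                 <-> (V q /\ ~ R q))].

Definition CR (R : rat -> Prop) (f : rat -> K) : Prop :=
  hahn_on R f /\ forall v, R v -> ~ supp (Lop f) (psi v).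

Definition CR' (R : rat -> Prop) (f : rat -> K) : Prop :=
  hahn_on R f /\ forall q, supp (Lop f) q -> ~ R (pi q).

End Defs.

(* Main.v *)
Require Import Defs.
From mathcomp Require Import all_boot all_order all_algebra.
From Stdlib Require Import ClassicalEpsilon Classical FunctionalExtensionality Wellfounded.
From mathcomp Require Import ring lra.
Import Order.TTheory GRing.Theory Num.Theory.
Local Open Scope ring_scope.
Lemma bigmin_spec (s : seq rat) (x0 : rat) :
  let m := \big[Order.min/x0]_(x <- s) x in
  (m = x0 \/ m \in s) /\ m <= x0 /\ forall x, x \in s -> m <= x.
Proof.
elim: s => [|y s [IH1 [IH2 IH3]]] /=; first by rewrite big_nil; split; [left|split].
rewrite big_cons; set m := \big[_/_]_(_ <- _) _ in IH1 IH2 IH3 *.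
split; last split.
- rewrite minElt; case: ifP => _; first by right; rewrite inE eqxx.
  by case: IH1 => [->|H]; [left|right; rewrite inE H orbT].
- by rewrite ge_min IH2 orbT.
- move=> x; rewrite inE => /orP [/eqP ->|H]; first by rewrite ge_min lexx.
  by rewrite ge_min IH3 // orbT.
Qed.

Lemma bigmax_spec (s : seq rat) (x0 : rat) :
  let m := \big[Order.max/x0]_(x <- s) x in
  (m = x0 \/ m \in s) /\ x0 <= m /\ forall x, x \in s -> x <= m.
Proof.
elim: s => [|y s [IH1 [IH2 IH3]]] /=; first by rewrite big_nil; split; [left|split].
rewrite big_cons; set m := \big[_/_]_(_ <- _) _ in IH1 IH2 IH3 *.
split; last split.
- rewrite maxElt; case: ifP => _.
  by case: IH1 => [->|H]; [left|right; rewrite inE H orbT].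
  by right; rewrite inE eqxx.
- by rewrite le_max IH2 orbT.
- move=> x; rewrite inE => /orP [/eqP ->|H]; first by rewrite le_max lexx.
  by rewrite le_max IH3 // orbT.
Qed.

Lemma seqmin_spec s : s != [::] -> seqmin s \in s /\ forall x, x \in s -> seqmin s <= x.
Proof.
case: s => [//|y s] _; rewrite /seqmin /=.
have [H1 [H2 H3]] := bigmin_spec (y :: s) y.
split => //; by case: H1 => [->|//]; rewrite inE eqxx.
Qed.

Lemma seqmax_spec s : s != [::] -> seqmax s \in s /\ forall x, x \in s -> x <= seqmax s.
Proof.
case: s => [//|y s] _; rewrite /seqmax /=.
have [H1 [H2 H3]] := bigmax_spec (y :: s) y.
split => //; by case: H1 => [->|//]; rewrite inE eqxx.
Qed.
Section Main.
Variable K : fieldType.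
Variables (l n : nat) (a : nat -> {poly K}).
Hypothesis hl : (2 <= l)%N.
Hypothesis ha0 : a 0%N != 0.

Definition pt (q : rat) (p : nat * nat) : rat := (q - p.2%:R) / l%:R ^+ p.1.
Definition ev (v : rat) (p : nat * nat) : rat := v * l%:R ^+ p.1 + p.2%:R.

Lemma lpos i : 0 < (l%:R : rat) ^+ i.
Proof. by apply: exprn_gt0; rewrite ltr0n; apply: leq_trans hl. Qed.

Lemma pt_ev v p : pt (ev v p) p = v.
Proof. by rewrite /pt /ev addrK mulfK // gt_eqF // lpos. Qed.

Lemma ev_pt q p : ev (pt q p) p = q.
Proof. by rewrite /pt /ev divfK ?subrK // gt_eqF // lpos. Qed.

Lemma le_pt q v p : (pt q p <= v) = (q <= ev v p).
Proof. by rewrite /pt ler_pdivrMr ?lpos // lerBlDr. Qed.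

Lemma memPL i j : ((i, j) \in PL n a) = [&& (i <= n)%N, (j < size (a i))%N & (a i)`_j != 0].
Proof.
apply/allpairsPdep/idP.
- case=> x [y [Hx Hy [-> ->]]]; move: Hx Hy; rewrite mem_iota /= add0n ltnS => ->.
  by rewrite mem_filter mem_iota add0n /= andbC.
- case/and3P=> H1 H2 H3; exists i, j; split => //.
  + by rewrite mem_iota add0n ltnS.
  + by rewrite mem_filter mem_iota add0n H3.
Qed.

Lemma pval_spec (p : {poly K}) : p != 0 ->
  (pval p < size p)%N /\ p`_(pval p) != 0 /\ forall j, (j < pval p)%N -> p`_j = 0.
Proof.
move=> p0.
have hh : has (fun c => c != 0) p.
  apply/hasP; exists p`_(size p).-1; first by apply: mem_nth; rewrite ltn_predL size_poly_gt0.
  by have := p0; rewrite -lead_coef_eq0.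
split; first by rewrite /pval -has_find.
split; first by have := nth_find 0 hh.
by move=> j hj; have := before_find 0 hj => /negbFE/eqP.
Qed.

Lemma PL0 : (0%N, pval (a 0%N)) \in PL n a.
Proof. have [h1 [h2 _]] := pval_spec _ ha0; by rewrite memPL leq0n h1 h2. Qed.

Lemma PL_neq0 : PL n a != [::].
Proof. by apply/eqP => E; have := PL0; rewrite E. Qed.

Lemma pi_ge q p : p \in PL n a -> pt q p <= Defs.pi l n a q.
Proof.
move=> hp; have ne : [seq pt q p | p <- PL n a] != [::].
  by rewrite -size_eq0 size_map size_eq0 PL_neq0.
have [_ H] := seqmax_spec _ ne; apply: H; exact: (map_f (fun p => pt q p) hp).
Qed.

Lemma pi_in q : exists2 p, p \in PL n a & Defs.pi l n a q = pt q p.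
Proof.
have ne : [seq pt q p | p <- PL n a] != [::].
  by rewrite -size_eq0 size_map size_eq0 PL_neq0.
have [H _] := seqmax_spec _ ne; move: H => /mapP [p hp E].
by exists p.
Qed.

Lemma psi_le v p : p \in PL n a -> psi l n a v <= ev v p.
Proof.
move=> hp; have ne : Psi l n a v != [::].
  by rewrite -size_eq0 size_map size_eq0 PL_neq0.
have [_ H] := seqmin_spec _ ne; apply: H; exact: (map_f (fun p => ev v p) hp).
Qed.

Lemma psi_in v : exists2 p, p \in PL n a & psi l n a v = ev v p.
Proof.
have ne : Psi l n a v != [::].
  by rewrite -size_eq0 size_map size_eq0 PL_neq0.
have [H _] := seqmin_spec _ ne; move: H => /mapP [p hp E].
by exists p.
Qed.

Lemma pi_psi v : Defs.pi l n a (psi l n a v) = v.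
Proof.
apply/eqP; rewrite eq_le; apply/andP; split.
- have [p hp ->] := pi_in (psi l n a v); by rewrite le_pt psi_le.
- have [p hp E] := psi_in v; have := pi_ge (psi l n a v) p hp; by rewrite E pt_ev.
Qed.

Lemma psi_pi q : psi l n a (Defs.pi l n a q) = q.
Proof.
apply/eqP; rewrite eq_le; apply/andP; split.
- have [p hp ->] := pi_in q; by rewrite -{2}(ev_pt q p) psi_le.
- have [p hp ->] := psi_in (Defs.pi l n a q); by rewrite -le_pt pi_ge.
Qed.

Lemma ev_Psi u p : p \in PL n a -> ev u p \in Psi l n a u.
Proof. by move=> hp; exact: (map_f (fun p => ev u p) hp). Qed.

Lemma Lop_ext (h1 h2 : rat -> K) q :
  (forall p, p \in PL n a -> h1 (pt q p) = h2 (pt q p)) -> Lop l n a h1 q = Lop l n a h2 q.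
Proof.
move=> H; apply: eq_bigr => i _; apply: eq_bigr => j _.
have [->|nz] := eqVneq (a i)`_j 0; first by rewrite !mul0r.
congr (_ * _); apply: (H (nat_of_ord i, nat_of_ord j)).
by rewrite memPL -ltnS ltn_ord ltn_ord nz.
Qed.

Lemma Lop_lin (c : K) (h1 h2 : rat -> K) q :
  Lop l n a (fun x => c * h1 x + h2 x) q = c * Lop l n a h1 q + Lop l n a h2 q.
Proof.
rewrite /Lop mulr_sumr -big_split; apply: eq_bigr => i _.
rewrite mulr_sumr -big_split; apply: eq_bigr => j _.
by rewrite mulrDr mulrCA.
Qed.

Lemma Lop0 q : Lop l n a (fun _ => 0) q = 0.
Proof. by rewrite /Lop big1 // => i _; rewrite big1 // => j _; rewrite mulr0. Qed.

Lemma Lop_zero (h : rat -> K) q :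
  (forall p, p \in PL n a -> h (pt q p) = 0) -> Lop l n a h q = 0.
Proof. by move=> H; rewrite (@Lop_ext h (fun _ => 0)) ?Lop0. Qed.

Lemma Lop_sub (h1 h2 : rat -> K) q :
  Lop l n a (fun x => h1 x - h2 x) q = Lop l n a h1 q - Lop l n a h2 q.
Proof.
have := Lop_lin (-1) h2 h1 q; rewrite mulN1r addrC => <-.
by apply: Lop_ext => p _; rewrite mulN1r addrC.
Qed.


Definition cf v := Lop l n a (fun u => if u == v then 1 else 0) (psi l n a v).

Lemma minim_pval v i j : (i, j) \in PL n a -> ev v (i, j) = psi l n a v ->
  j = pval (a i) /\ a i != 0.
Proof.
rewrite memPL => /and3P [hi hj hc] E.
have ai : a i != 0 by apply: contraNneq hc => ->; rewrite coef0.
have [h1 [h2 h3]] := pval_spec _ ai.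
have inP : (i, pval (a i)) \in PL n a by rewrite memPL hi h1 h2.
split => //.
case: (ltngtP j (pval (a i))) => // H.
- by move: hc; rewrite h3 ?eqxx.
- have := psi_le v _ inP; rewrite -E /ev /= lerD2l ler_nat leqNgt H //.
Qed.

Lemma two_minim_slope v i1 j1 i2 j2 : (i1 < i2)%N ->
  (i1, j1) \in PL n a -> (i2, j2) \in PL n a ->
  ev v (i1, j1) = psi l n a v -> ev v (i2, j2) = psi l n a v -> slope l n a (- v).
Proof.
move=> lt12 h1 h2 E1 E2.
have [pv1 a1] := minim_pval _ _ _ h1 E1; have [pv2 a2] := minim_pval _ _ _ h2 E2.
move: (h2); rewrite memPL => /and3P [hi2 _ _].
exists i1, i2; split => //.
- by rewrite lt12 hi2.
- rewrite -pv1 -pv2.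
  have lt : (l%:R : rat) ^+ i1 < l%:R ^+ i2 by rewrite ltr_eXn2l // ltr1n.
  have nz : (l%:R : rat) ^+ i2 - l%:R ^+ i1 != 0 by rewrite subr_eq0 gt_eqF.
  have E : (j2%:R : rat) - j1%:R = - v * (l%:R ^+ i2 - l%:R ^+ i1).
    move: E1; rewrite -E2 /ev /= => E1.
    have -> : (j2%:R : rat) = v * l%:R ^+ i1 + j1%:R - v * l%:R ^+ i2 by rewrite E1 addrAC subrr add0r.
    ring.
  by rewrite E mulfK.
- move=> m hm am; have [k1 [k2 _]] := pval_spec _ am.
  have inP : (m, pval (a m)) \in PL n a by rewrite memPL hm k1 k2.
  have := psi_le v _ inP; rewrite -E1 /ev /= -pv1.
  by rewrite !mulNr !opprK !(addrC _ (v * _)).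
Qed.

Lemma minim_unique (R : rat -> Prop) v (hS : forall s, slope l n a s -> R (- s)) (nR : ~ R v) p1 p2 :
  p1 \in PL n a -> p2 \in PL n a -> ev v p1 = psi l n a v -> ev v p2 = psi l n a v -> p1 = p2.
Proof.
case: p1 => i1 j1; case: p2 => i2 j2 h1 h2 E1 E2.
case: (ltngtP i1 i2) => H.
- by case: nR; rewrite -[v]opprK; apply: hS; exact: (two_minim_slope _ _ _ _ _ H h1 h2 E1 E2).
- by case: nR; rewrite -[v]opprK; apply: hS; exact: (two_minim_slope _ _ _ _ _ H h2 h1 E2 E1).
- have [-> _] := minim_pval _ _ _ h1 E1; have [-> _] := minim_pval _ _ _ h2 E2; by rewrite H.
Qed.

Lemma pt_le_psi v p : p \in PL n a -> pt (psi l n a v) p <= v.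
Proof. by move=> hp; rewrite -{2}(pi_psi v) pi_ge. Qed.

Lemma Lop_split v (h : rat -> K) :
  (forall p, p \in PL n a -> pt (psi l n a v) p < v -> h (pt (psi l n a v) p) = 0) ->
  Lop l n a h (psi l n a v) = h v * cf v.
Proof.
move=> H.
have -> : h v * cf v = h v * cf v + Lop l n a (fun _ => 0) (psi l n a v) by rewrite Lop0 addr0.
rewrite /cf -Lop_lin.
apply: Lop_ext => p hp; have := pt_le_psi v p hp; rewrite le_eqVlt => /orP [/eqP E|lt].
- by rewrite E eqxx mulr1 addr0.
- by rewrite H // lt_eqF //= mulr0 addr0.
Qed.

Lemma cf_neq0 (R : rat -> Prop) v (hS : forall s, slope l n a s -> R (- s)) (nR : ~ R v) :
  cf v != 0.
Proof.
have [[i0 j0] hp0 E0] := psi_in v.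
have hp0' := hp0; rewrite memPL in hp0'; case/and3P: hp0' => hi hj hc.
have key : forall (i : nat) (j : nat), (i <= n)%N -> (j < size (a i))%N -> (i, j) != (i0, j0) ->
    (a i)`_j * (if (psi l n a v - j%:R) / l%:R ^+ i == v then 1 else 0) = 0.
  move=> i j hi' hj' ne.
  have [->|nz] := eqVneq (a i)`_j 0; first by rewrite mul0r.
  case: eqP => [E|]; last by rewrite mulr0.
  have hp : (i, j) \in PL n a by rewrite memPL hi' hj' nz.
  have E' : ev v (i, j) = psi l n a v by move: (ev_pt (psi l n a v) (i, j)); rewrite (_ : pt _ _ = v).
  by move: ne; rewrite (minim_unique R v hS nR (i, j) (i0, j0) hp hp0 E' (esym E0)) eqxx.
rewrite /cf /Lop (bigD1 (Ordinal (n:=n.+1) (m:=i0) hi)) //= (bigD1 (Ordinal hj)) //=.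
rewrite big1 ?addr0; last first.
  move=> j /= hne; apply: key => //.
  by apply: contra hne => /eqP [E]; apply/eqP/val_inj.
rewrite big1 ?addr0; last first.
  move=> i /= hne; apply: big1 => j _; apply: key; first by rewrite -ltnS.
    done.
  by apply: contra hne => /eqP [E _]; apply/eqP/val_inj => /=.
have -> : (psi l n a v - j0%:R) / l%:R ^+ i0 = v by rewrite E0 -[X in X = _]/(pt (ev v (i0,j0)) (i0, j0)) pt_ev.
by rewrite eqxx mulr1.
Qed.

Lemma wo_sub (A B : rat -> Prop) : well_ordered A -> (forall q, B q -> A q) -> well_ordered B.
Proof. by move=> WA HB C sub ne; apply: WA => // q /sub /HB. Qed.

Definition ltV (V : rat -> Prop) u v := V u /\ V v /\ u < v.

Lemma wo_wf (V : rat -> Prop) : well_ordered V -> well_founded (ltV V).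
Proof.
move=> WV x; apply: NNPP => nA.
have [Vx|nVx] := classic (V x); last by apply: nA; constructor => y [_ [Vx _]].
have [m [[Vm nAm] Hm]] := WV (fun y => V y /\ ~ Acc (ltV V) y) (fun q H => proj1 H) (ex_intro _ x (conj Vx nA)).
apply: nAm; constructor => y [Vy [_ lt]]; apply: NNPP => nAy.
by have := Hm y (conj Vy nAy); rewrite leNgt lt.
Qed.

Section Surj.
Variables (V R : rat -> Prop) (g : rat -> K).
Hypothesis WV : well_ordered V.
Hypothesis H4 : forall q, (exists v, V v /\ exists2 w, w \in Psi l n a v & q = Defs.pi l n a w) -> V q.
Hypothesis S1 : forall s, slope l n a s -> R (- s).
Hypothesis S2 : forall q, R q -> V q.
Hypothesis S3 : forall q, (exists v, (V v /\ ~ R v) /\ exists2 w, w \in Psi l n a v & q = Defs.pi l n a w) -> V q /\ ~ R q.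
Hypothesis Cg : CR l n a R g.

Definition hcut (f : rat -> K) v u : K :=
  if excluded_middle_informative (ltV V u v) then f u else 0.

Definition Fstep v (rec : forall u, ltV V u v -> K) : K :=
  let h := fun u => match excluded_middle_informative (ltV V u v) with
                    | left H => rec u H | right _ => 0 end in
  if excluded_middle_informative (V v) then
    if excluded_middle_informative (R v) then g v
    else - Lop l n a h (psi l n a v) / cf v
  else 0.

Definition fsol : rat -> K := Fix (wo_wf V WV) (fun _ => K) Fstep.

Lemma fE v : fsol v =
  if excluded_middle_informative (V v) then
    if excluded_middle_informative (R v) then g v
    else - Lop l n a (hcut fsol v) (psi l n a v) / cf v
  else 0.
Proof.
rewrite /fsol Fix_eq; last first.
  move=> x f1 f2 E; rewrite /Fstep.
  have -> : (fun u => match excluded_middle_informative (ltV V u x) with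
                    | left H => f1 u H | right _ => 0 end) =
            (fun u => match excluded_middle_informative (ltV V u x) with
                    | left H => f2 u H | right _ => 0 end).
    by apply: functional_extensionality => u; case: excluded_middle_informative.
  by [].
rewrite /Fstep /hcut /=; case: (excluded_middle_informative (V v)) => //= _.
case: (excluded_middle_informative (R v)) => //= _.
congr (- Lop l n a _ _ / _); apply: functional_extensionality => u.
by case: excluded_middle_informative.
Qed.

Lemma fsol_V v : fsol v != 0 -> V v.
Proof. rewrite fE; destruct (excluded_middle_informative (V v)) => //=; by rewrite eqxx. Qed.

Lemma g_R q : g q != 0 -> R q.
Proof. by case: Cg => [[_ H] _]; apply: H. Qed.

Lemma Lop_g v : R v -> Lop l n a g (psi l n a v) = 0.
Proof. by move=> Rv; case: Cg => _ H; have := H v Rv; rewrite /supp => /negP; rewrite negbK => /eqP. Qed.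

Lemma fsol_Lop q : Lop l n a fsol q = 0.
Proof.
rewrite -(psi_pi q); set v := Defs.pi l n a q.
have ptPsi : forall p, p \in PL n a -> Defs.pi l n a (ev (pt (psi l n a v) p) p) = v.
  by move=> p hp; rewrite ev_pt pi_psi.
have [Vv|nVv] := classic (V v).
- have [Rv|nRv] := classic (R v).
  + have Z : Lop l n a (fun x => fsol x - g x) (psi l n a v) = 0.
      apply: Lop_zero => p hp; set u := pt _ p.
      have [Ru|nRu] := classic (R u).
        rewrite fE; destruct (excluded_middle_informative (V u)) as [HV|nV]; last by case: nV; exact: S2.
        by destruct (excluded_middle_informative (R u)) => //=; rewrite subrr.
      have -> : g u = 0 by apply/eqP; apply: contraT => /g_R Ru'; case: nRu.
      rewrite subr0; apply/eqP; apply: contraT => /fsol_V Vu.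
      have [_ //] : V v /\ ~ R v.
      apply: S3; exists u; split => //; exists (ev u p); [exact: ev_Psi | by rewrite ptPsi].
    by move: Z; rewrite Lop_sub Lop_g // subr0.
  + have cf0 := cf_neq0 R v S1 nRv.
    have Z : Lop l n a (fun x => fsol x - hcut fsol v x) (psi l n a v) =
             (fsol v - hcut fsol v v) * cf v.
      apply: Lop_split => p hp lt; set u := pt _ p in lt *.
      rewrite /hcut; destruct (excluded_middle_informative (ltV V u v)) as [HH|nlt] => /=; first by rewrite subrr.
      rewrite subr0; apply/eqP; apply: contraT => /fsol_V Vu.
      by case: nlt; split => //; split.
    have hv0 : hcut fsol v v = 0.
      rewrite /hcut; destruct (excluded_middle_informative (ltV V v v)) as [[HA [HB H]]|HC] => //=.
      by rewrite ltxx in H.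
    move: Z; rewrite hv0 subr0 Lop_sub => /eqP; rewrite subr_eq => /eqP ->.
    rewrite fE; destruct (excluded_middle_informative (V v)) => //=; destruct (excluded_middle_informative (R v)) => //=.
    by rewrite mulfVK // addrC subrr.
- apply: Lop_zero => p hp; set u := pt _ p.
  apply/eqP; apply: contraT => /fsol_V Vu.
  case: nVv; apply: H4; exists u; split => //; exists (ev u p); first exact: ev_Psi.
  by rewrite ptPsi.
Qed.

Lemma surj : exists f, Sol l n a f /\ forall q, restr R f q = g q.
Proof.
exists fsol; split.
- split; last exact: fsol_Lop.
  by apply: (wo_sub V _ WV) => q; apply: fsol_V.
- move=> q; rewrite /restr; case: excluded_middle_informative => Rq.
  + rewrite fE; destruct (excluded_middle_informative (V q)) as [HV|nV]; last by case: nV; exact: S2.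
    by destruct (excluded_middle_informative (R q)).
  + by apply/esym/eqP; apply: contraT => /g_R.
Qed.
End Surj.
End Main.
Theorem mainTheorem17 (K : fieldType) (l n : nat) (a : nat -> {poly K})
    (V R : rat -> Prop) :
  (2 <= l)%N -> (1 <= n)%N -> a 0%N != 0 -> a n != 0 ->
  hypH l n a V -> starV l n a V R ->
  [/\ (* the two descriptions of C_R coincide *)
      (forall f, CR l n a R f <-> CR' l n a R f),
      (* restriction is K-linear *)
      (forall (c : K) (f g : rat -> K) q,
          restr R (fun x => c * f x + g x) q = c * restr R f q + restr R g q),
      (* it maps Sol(L,H) into C_R *)
      (forall f, Sol l n a f -> CR l n a R (restr R f)),
      (* injective on Sol(L,H) *)
      (forall f1 f2, Sol l n a f1 -> Sol l n a f2 ->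
          (forall q, restr R f1 q = restr R f2 q) -> forall q, f1 q = f2 q) &
      (* onto C_R *)
      (forall g, CR l n a R g ->
          exists f, Sol l n a f /\ forall q, restr R f q = g q)].
Proof.
move=> hl hn ha0 han [H1 H2 H3 H4] [S1 S2 S3].
split.
- move=> f; split; case=> hf Hf; split => //.
  + move=> q hq Rq; apply: (Hf _ Rq); by rewrite (psi_pi _ _ _ _ hl ha0).
  + move=> v Rv hs; apply: (Hf _ hs); by rewrite (pi_psi _ _ _ _ hl ha0).
- move=> c f g q; rewrite /restr.
  by destruct (excluded_middle_informative (R q)) => //=; rewrite mulr0 addr0.
- move=> f [hf Lf]; split.
  + split.
      apply: (wo_sub _ _ hf) => q; rewrite /supp /restr.
      by destruct (excluded_middle_informative (R q)) => //=; rewrite eqxx.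
    move=> q; rewrite /supp /restr.
    by destruct (excluded_middle_informative (R q)) => //=; rewrite eqxx.
  + move=> v Rv; rewrite /supp.
    have Z : Lop l n a (fun x => f x - restr R f x) (psi l n a v) = 0.
      apply: Lop_zero => p hp; set u := pt l _ p; rewrite /restr.
      destruct (excluded_middle_informative (R u)) as [Ru|nRu] => /=; first by rewrite subrr.
      rewrite subr0; apply/eqP; apply: contraT => nz.
      have Vu := H1 f (conj hf Lf) u nz.
      have [_ //] : V v /\ ~ R v.
      apply/S3; exists u; split => //; exists (ev l u p); first exact: ev_Psi.
      by rewrite /u (ev_pt _ hl) (pi_psi _ _ _ _ hl ha0).
    move: Z; rewrite Lop_sub Lf sub0r => /eqP; rewrite oppr_eq0 => /eqP ->.
    by rewrite eqxx.
- move=> f1 f2 [h1 L1] [h2 L2] Hr q; apply: NNPP => ne.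
  pose d := fun x => f1 x - f2 x.
  have dV : forall x, d x != 0 -> V x.
    move=> x; rewrite /d; have [E1|E1] := eqVneq (f1 x) 0.
      have [E2|E2] := eqVneq (f2 x) 0; first by rewrite E1 E2 subrr eqxx.
      by move=> _; exact: (H1 f2 (conj h2 L2) x E2).
    by move=> _; exact: (H1 f1 (conj h1 L1) x E1).
  have dq : d q != 0 by rewrite /d subr_eq0; apply/eqP.
  have [m [dm Hm]] := H2 (fun x => d x != 0) dV (ex_intro _ q dq).
  have Ld : Lop l n a d (psi l n a m) = 0 by rewrite /d Lop_sub L1 L2 subrr.
  have nRm : ~ R m.
    move=> Rm; move: dm; have := Hr m; rewrite /restr /d.
    by destruct (excluded_middle_informative (R m)) => //= ->; rewrite subrr eqxx.
  have cf0 := cf_neq0 _ _ _ _ hl ha0 R m S1 nRm.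
  move: Ld; rewrite (Lop_split _ _ _ _ hl ha0) => [/eqP|p hp lt].
    by rewrite mulf_eq0 (negbTE dm) (negbTE cf0).
  apply/eqP; apply: contraT => nz; have := Hm _ nz.
  by rewrite leNgt lt.
- move=> g Cg; apply: (surj _ _ _ _ hl ha0 V R g H2 _ S1 S2 _ Cg).
  + by move=> q Hq; apply/H4.
  + by move=> q Hq; apply/S3.
Qed.
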